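(* Let $\Lambda$ be a torsion-free group generated by elements $f,g,h$ with $[f,h]\ne1$ and $[f,g]=1$, and let $G=\langle g,h\rangle\le\Lambda$. Suppose $G$ is non-trivial, $g\ne1$, $h\ne1$, and that if $G$ is cyclic then $g=h^n$ for some $n\in\mathbb{Z}$ with $|n|>1$. Then there exists a finitely generated torsion-free group $\Gamma$ such that: (1) $G$ embeds as a subgroup of $\Gamma$ (we identify $g,h$ with their images); (2) there exist distinct elements $a,b\in\Gamma\setminus\{1\}$ centralizing $g$; (3) the commutator $[a,[b,h]]$ is non-trivial and centralizes $g$.
   Context: $[x,y]$ denotes the group commutator. *)

(* Defs.v *)
From Stdlib Require Import ZArith List.
Set Implicit Arguments.

Record group := Group {
  gcar :> Type;
  gmul : gcar -> gcar -> gcar;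
  gone : gcar;
  ginv : gcar -> gcar;
  gmulA : forall x y z, gmul x (gmul y z) = gmul (gmul x y) z;
  gmul1g : forall x, gmul gone x = x;
  gmulVg : forall x, gmul (ginv x) x = gone
}.

Arguments gmul {g}.
Arguments gone {g}.
Arguments ginv {g}.

Section GroupDefs.
Variable G : group.

Fixpoint gpow (x : G) (n : nat) : G :=
  match n with O => gone | S m => gmul x (gpow x m) end.

Definition gpowz (x : G) (n : Z) : G :=
  match n with
  | Z0 => gone
  | Zpos p => gpow x (Pos.to_nat p)
  | Zneg p => ginv (gpow x (Pos.to_nat p))
  end.

Definition comm (x y : G) : G := gmul (gmul (ginv x) (ginv y)) (gmul x y).

Definition commute (x y : G) : Prop := gmul x y = gmul y x.

Definition torsion_free : Prop :=
  forall (x : G) (n : nat), (0 < n)%nat -> gpow x n = gone -> x = gone.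

Inductive gen (S : G -> Prop) : G -> Prop :=
  | gen_in : forall x, S x -> gen S x
  | gen_one : gen S gone
  | gen_inv : forall x, gen S x -> gen S (ginv x)
  | gen_mul : forall x y, gen S x -> gen S y -> gen S (gmul x y).

Definition finitely_generated : Prop :=
  exists s : list G, forall x : G, gen (fun y => In y s) x.

Definition cyclic_subgroup (H : G -> Prop) : Prop :=
  exists c : G, H c /\ forall x : G, H x <-> exists n : Z, x = gpowz c n.

End GroupDefs.

Arguments gen {G}.
Arguments gpow {G}.
Arguments gpowz {G}.
Arguments comm {G}.
Arguments commute {G}.
Arguments cyclic_subgroup {G}.

Definition embeds_on {A B : group} (H : A -> Prop) (phi : A -> B) : Prop :=
  (forall x y, H x -> H y -> phi (gmul x y) = gmul (phi x) (phi y)) /\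
  (forall x y, H x -> H y -> phi x = phi y -> x = y).

(* Main.v *)
Require Import Defs.
From Stdlib Require Import ZArith List Lia.
From Stdlib Require Import FunctionalExtensionality ProofIrrelevance ClassicalEpsilon.
Import ListNotations.

Arguments gmulA {g}. Arguments gmul1g {g}. Arguments gmulVg {g}.

Section GL.
Variable G : group.
Implicit Types x y z : G.

Lemma mulgV x : gmul x (ginv x) = gone.
Proof.
  rewrite <- (gmul1g (gmul x (ginv x))).
  rewrite <- (gmulVg (ginv x)) at 1.
  rewrite <- gmulA. rewrite (gmulA (ginv x) x (ginv x)). rewrite gmulVg, gmul1g.
  apply gmulVg.
Qed.

Lemma mulg1 x : gmul x gone = x.
Proof. rewrite <- (gmulVg x), gmulA, mulgV, gmul1g. reflexivity. Qed.

Lemma mul_eq1_inv x y : gmul x y = gone -> x = ginv y.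
Proof.
  intro H. rewrite <- (mulg1 x), <- (mulgV y), gmulA, H, gmul1g. reflexivity.
Qed.

Lemma invgK x : ginv (ginv x) = x.
Proof. symmetry. apply mul_eq1_inv. apply mulgV. Qed.

Lemma inv1 : ginv (@gone G) = gone.
Proof. symmetry. apply mul_eq1_inv. apply mulg1. Qed.

Lemma invMg x y : ginv (gmul x y) = gmul (ginv y) (ginv x).
Proof.
  symmetry. apply mul_eq1_inv.
  rewrite <- gmulA, (gmulA (ginv x) x y), gmulVg, gmul1g. apply gmulVg.
Qed.

Lemma inv_eq1 x : ginv x = gone -> x = gone.
Proof. intro H. rewrite <- (invgK x), H. apply inv1. Qed.

Lemma comm1_commute x y : comm x y = gone -> gmul x y = gmul y x.
Proof.
  unfold comm. intro H. apply mul_eq1_inv in H. apply (f_equal ginv) in H.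
  rewrite invMg, !invgK in H. symmetry. exact H.
Qed.

Lemma commute_comm1 x y : gmul x y = gmul y x -> comm x y = gone.
Proof.
  unfold comm. intro H. rewrite H, <- gmulA, (gmulA (ginv y) y x), gmulVg, gmul1g.
  apply gmulVg.
Qed.

Lemma commute_inv x y : gmul x y = gmul y x -> gmul x (ginv y) = gmul (ginv y) x.
Proof.
  intro H.
  assert (E: gmul (ginv y) (gmul (gmul x y) (ginv y)) = gmul (ginv y) (gmul (gmul y x) (ginv y)))
    by (rewrite H; reflexivity).
  rewrite <- !gmulA, mulgV, mulg1 in E.
  rewrite !gmulA, gmulVg, gmul1g in E. symmetry; exact E.
Qed.

Lemma comm1l y : comm (@gone G) y = gone.
Proof. apply commute_comm1. rewrite gmul1g, mulg1. reflexivity. Qed.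

Lemma commxx x : comm x x = gone.
Proof. apply commute_comm1. reflexivity. Qed.

Lemma commx1 x : comm x (@gone G) = gone.
Proof. apply commute_comm1. rewrite gmul1g, mulg1. reflexivity. Qed.

Lemma gpow_add x m n : gpow x (m + n) = gmul (gpow x m) (gpow x n).
Proof.
  induction m; simpl. rewrite gmul1g; reflexivity.
  rewrite IHm, gmulA. reflexivity.
Qed.

Lemma gpow_succ_r x n : gpow x (S n) = gmul (gpow x n) x.
Proof.
  replace (S n) with (n + 1)%nat by lia. rewrite gpow_add. simpl. rewrite mulg1. reflexivity.
Qed.

Lemma gpowz_succ x a : gpowz x (Z.succ a) = gmul (gpowz x a) x.
Proof.
  destruct a as [|p|p]; simpl.
  - rewrite mulg1, gmul1g. reflexivity.
  - rewrite Pos.add_1_r, Pos2Nat.inj_succ, gpow_succ_r. reflexivity.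
  - destruct (Pos.succ_pred_or p) as [->|Hp].
    + simpl. rewrite mulg1, gmulVg. reflexivity.
    + rewrite <- Hp. replace (Z.pos_sub 1 (Pos.succ (Pos.pred p))) with (Zneg (Pos.pred p)).
      2:{ change (Z.pos_sub 1 (Pos.succ (Pos.pred p))) with (Z.succ (Zneg (Pos.succ (Pos.pred p)))). lia. }
      simpl. rewrite Pos2Nat.inj_succ. simpl. rewrite invMg, <- gmulA, gmulVg, mulg1. reflexivity.
Qed.

Lemma gpowz_pred x a : gpowz x (Z.pred a) = gmul (gpowz x a) (ginv x).
Proof.
  rewrite <- (Z.succ_pred a) at 2. rewrite gpowz_succ, <- gmulA, mulgV, mulg1. reflexivity.
Qed.

Lemma gpowz_add x a b : gpowz x (a + b) = gmul (gpowz x a) (gpowz x b).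
Proof.
  revert a. induction b using Z.peano_ind; intro a.
  - rewrite Z.add_0_r. simpl. rewrite mulg1. reflexivity.
  - rewrite Z.add_succ_r, !gpowz_succ, IHb, gmulA. reflexivity.
  - rewrite Z.add_pred_r, !gpowz_pred, IHb, gmulA. reflexivity.
Qed.

Lemma gpowz_opp x a : gpowz x (- a) = ginv (gpowz x a).
Proof.
  apply mul_eq1_inv. rewrite <- gpowz_add. replace (- a + a)%Z with 0%Z by lia. reflexivity.
Qed.

Lemma gpowz_mul x m n : gpowz (gpowz x m) n = gpowz x (m * n).
Proof.
  induction n using Z.peano_ind.
  - rewrite Z.mul_0_r. reflexivity.
  - rewrite gpowz_succ, IHn, <- gpowz_add, Z.mul_succ_r. reflexivity.
  - rewrite gpowz_pred, IHn, <- gpowz_opp, <- gpowz_add, Z.mul_pred_r. reflexivity.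
Qed.

Lemma gpowz1 x : gpowz x 1 = x.
Proof. simpl. apply mulg1. Qed.

Lemma gpowz_tf x k : torsion_free G -> k <> 0%Z -> gpowz x k = gone -> x = gone.
Proof.
  intros T Hk H. destruct k as [|p|p]; [congruence| |].
  - apply (T x (Pos.to_nat p)); [lia | exact H].
  - apply inv_eq1 in H. apply (T x (Pos.to_nat p)); [lia | exact H].
Qed.

End GL.
(* wreath product L^L x| L *)
Section Wreath.
Variable L : group.
Definition wcar : Type := ((L -> L) * L)%type.
Definition wmul (a b : wcar) : wcar :=
  (fun l => gmul (fst a l) (fst b (gmul l (snd a))), gmul (snd a) (snd b)).
Definition wone : wcar := (fun _ => gone, gone).
Definition winv (a : wcar) : wcar :=
  (fun l => ginv (fst a (gmul l (ginv (snd a)))), ginv (snd a)).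

Lemma wmulA a b c : wmul a (wmul b c) = wmul (wmul a b) c.
Proof.
  destruct a as [u x], b as [v y], c as [w z]; unfold wmul; simpl. f_equal.
  - apply functional_extensionality; intro l. rewrite gmulA, gmulA. reflexivity.
  - apply gmulA.
Qed.

Lemma wmul1g a : wmul wone a = a.
Proof.
  destruct a as [u x]; unfold wmul; simpl. f_equal.
  - apply functional_extensionality; intro l. rewrite gmul1g, mulg1. reflexivity.
  - apply gmul1g.
Qed.

Lemma wmulVg a : wmul (winv a) a = wone.
Proof.
  destruct a as [u x]; unfold wmul, winv, wone; simpl. f_equal.
  - apply functional_extensionality; intro l. apply gmulVg.
  - apply gmulVg.
Qed.

Definition W : group := {| gcar := wcar; gmul := wmul; gone := wone; ginv := winv;
  gmulA := wmulA; gmul1g := wmul1g; gmulVg := wmulVg |}.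

Lemma W_snd_pow (a : W) n : snd (gpow a n) = gpow (snd a) n.
Proof. induction n; simpl; [reflexivity|]. rewrite IHn. reflexivity. Qed.

Lemma W_fst_pow (u : L -> L) n l : fst (@gpow W (u, gone) n) l = gpow (u l) n.
Proof.
  induction n; simpl; [reflexivity|]. rewrite mulg1, IHn. reflexivity.
Qed.

Lemma W_tf : torsion_free L -> torsion_free W.
Proof.
  intros T [u x] n Hn H.
  assert (Hx : x = gone).
  { apply (T x n Hn). rewrite <- (W_snd_pow (u, x)), H. reflexivity. }
  subst x. unfold gone; simpl; unfold wone. f_equal.
  apply functional_extensionality; intro l. apply (T _ n Hn).
  rewrite <- W_fst_pow, H. reflexivity.
Qed.

Definition phi' (x : L) : W := (fun _ => gone, x).

Lemma W_eq (a b : W) : (forall l, fst a l = fst b l) -> snd a = snd b -> a = b.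
Proof.
  destruct a, b; simpl; intros. f_equal; auto. apply functional_extensionality; auto.
Qed.

Lemma comm_fun_shift (u : L -> L) y :
  @comm W (u, gone) (phi' y) = (fun l => gmul (ginv (u l)) (u (gmul l (ginv y))), gone).
Proof.
  apply W_eq; simpl; [intro l|]; rewrite ?inv1, ?mulg1, ?gmul1g, ?inv1, ?mulg1, ?gmul1g.
  - reflexivity.
  - apply gmulVg.
Qed.

Lemma comm_fun_fun (u v : L -> L) :
  @comm W (u, gone) (v, gone) = (fun l => comm (u l) (v l), gone).
Proof.
  apply W_eq; simpl; [intro l|]; rewrite ?inv1, ?mulg1, ?gmul1g, ?inv1, ?mulg1, ?gmul1g.
  - reflexivity.
  - reflexivity.
Qed.

Lemma commute_fun (w : L -> L) y : (forall l, w (gmul l y) = w l) ->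
  @commute W (w, gone) (phi' y).
Proof.
  intro H. unfold commute. apply W_eq; simpl; [intro l|].
  - rewrite mulg1, gmul1g, H. reflexivity.
  - rewrite mulg1, gmul1g. reflexivity.
Qed.

End Wreath.

Section Sub.
Variable A : group.
Variable S : A -> Prop.
Definition scar := {x : A | gen S x}.
Definition smul (u v : scar) : scar :=
  exist _ (gmul (proj1_sig u) (proj1_sig v)) (gen_mul (proj2_sig u) (proj2_sig v)).
Definition sone : scar := exist _ gone (gen_one _ _).
Definition sinv (u : scar) : scar := exist _ (ginv (proj1_sig u)) (gen_inv (proj2_sig u)).

Lemma sub_eq (u v : scar) : proj1_sig u = proj1_sig v -> u = v.
Proof.
  destruct u as [x px], v as [y py]; simpl; intro E. subst y. f_equal. apply proof_irrelevance.
Qed.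

Lemma smulA u v w : smul u (smul v w) = smul (smul u v) w.
Proof. apply sub_eq; simpl. apply gmulA. Qed.
Lemma smul1g u : smul sone u = u.
Proof. apply sub_eq; simpl. apply gmul1g. Qed.
Lemma smulVg u : smul (sinv u) u = sone.
Proof. apply sub_eq; simpl. apply gmulVg. Qed.

Definition Sub : group := {| gcar := scar; gmul := smul; gone := sone; ginv := sinv;
  gmulA := smulA; gmul1g := smul1g; gmulVg := smulVg |}.

Definition lift (x : A) : Sub :=
  match excluded_middle_informative (gen S x) with
  | left p => exist _ x p
  | right _ => sone
  end.

Lemma lift_val x : gen S x -> proj1_sig (lift x) = x.
Proof. intro p. unfold lift. destruct (excluded_middle_informative (gen S x)); [reflexivity|contradiction]. Qed.

Lemma Sub_pow (u : Sub) n : proj1_sig (gpow u n) = gpow (proj1_sig u) n.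
Proof. induction n; simpl; [reflexivity|]. rewrite IHn. reflexivity. Qed.

Lemma Sub_tf : torsion_free A -> torsion_free Sub.
Proof.
  intros T u n Hn H. apply sub_eq. simpl. apply (T _ n Hn). rewrite <- Sub_pow, H. reflexivity.
Qed.

Lemma Sub_fg (lst : list A) : (forall x, S x <-> In x lst) -> finitely_generated Sub.
Proof.
  intro HS. exists (map lift lst).
  assert (K : forall x, gen S x -> forall p : gen S x,
             gen (fun y : Sub => In y (map lift lst)) (exist _ x p)).
  { intros x0 H0. induction H0 as [x Hx| |x px IH|x y px IHx py IHy]; intro p.
    - assert (E : lift x = exist _ x p).
      { apply sub_eq. rewrite lift_val; [reflexivity|]. apply gen_in; exact Hx. }
      rewrite <- E. apply gen_in. apply in_map. apply HS; exact Hx.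
    - assert (E : @gone Sub = exist _ gone p) by (apply sub_eq; reflexivity).
      rewrite <- E. apply gen_one.
    - assert (E : @ginv Sub (exist _ x px) = exist _ (ginv x) p) by (apply sub_eq; reflexivity).
      rewrite <- E. apply gen_inv; apply IH.
    - assert (E : @gmul Sub (exist _ x px) (exist _ y py) = exist _ (gmul x y) p)
        by (apply sub_eq; reflexivity).
      rewrite <- E. apply gen_mul; [apply IHx|apply IHy]. }
  intros [x px]. apply K; exact px.
Qed.

Lemma Sub_comm (u v : Sub) : proj1_sig (comm u v) = comm (proj1_sig u) (proj1_sig v).
Proof. reflexivity. Qed.
Lemma Sub_mul (u v : Sub) : proj1_sig (gmul u v) = gmul (proj1_sig u) (proj1_sig v).
Proof. reflexivity. Qed.

End Sub.
Section Main.
Variable L : group.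
Variables f g h : L.
Definition P (l : L) : Prop := gen (fun y => y = g) l.

Lemma P_pow n : P (gpowz g n).
Proof.
  assert (Hn : forall m, P (gpow g m)).
  { induction m; simpl. apply gen_one. apply gen_mul; [apply gen_in; reflexivity| exact IHm]. }
  destruct n; simpl; [apply gen_one| apply Hn | apply gen_inv, Hn].
Qed.

Lemma P_powz x : P x -> exists n, x = gpowz g n.
Proof.
  induction 1 as [x Hx| |x _ [n Hn]|x y _ [m Hm] _ [n Hn]].
  - exists 1%Z. subst. symmetry; apply gpowz1.
  - exists 0%Z. reflexivity.
  - exists (- n)%Z. rewrite gpowz_opp, Hn. reflexivity.
  - exists (m + n)%Z. rewrite gpowz_add, Hm, Hn. reflexivity.
Qed.

Lemma notP_h : torsion_free L -> g <> gone ->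
  (cyclic_subgroup (gen (fun y => y = g \/ y = h)) ->
     exists n : Z, g = gpowz h n /\ (1 < Z.abs n)%Z) -> ~ P h.
Proof.
  intros T Hg Hc Ph.
  destruct (P_powz _ Ph) as [m Hm].
  destruct Hc as [n [Hn Habs]].
  - exists g. split; [apply gen_in; left; reflexivity|].
    intro x; split.
    + intro Hx. apply P_powz. induction Hx as [x [->| ->]| | |].
      * apply gen_in; reflexivity.
      * exact Ph.
      * apply gen_one.
      * apply gen_inv; assumption.
      * apply gen_mul; assumption.
    + intros [k ->]. generalize (P_pow k). induction 1 as [x Hx| | |].
      * apply gen_in; left; exact Hx.
      * apply gen_one.
      * apply gen_inv; assumption.
      * apply gen_mul; assumption.
  - rewrite Hm, gpowz_mul in Hn.
    apply Hg. apply (gpowz_tf _ g (m * n - 1)%Z T).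
    + intro E. assert (E2 : (m * n = 1)%Z) by lia.
      apply Z.eq_mul_1 in E2. lia.
    + unfold Z.sub. rewrite gpowz_add, <- Hn. change (-1)%Z with (- (1))%Z.
      rewrite gpowz_opp, gpowz1. apply mulgV.
Qed.

Lemma P_mulg l : P (gmul l g) <-> P l.
Proof.
  split; intro H.
  - replace l with (gmul (gmul l g) (ginv g)).
    + apply gen_mul; [exact H| apply gen_inv, gen_in; reflexivity].
    + rewrite <- gmulA, mulgV, mulg1. reflexivity.
  - apply gen_mul; [exact H| apply gen_in; reflexivity].
Qed.

Lemma P_shift l : ~ P h -> P l -> ~ P (gmul l (ginv h)).
Proof.
  intros Nh Pl Pl'. apply Nh.
  replace h with (gmul (ginv (gmul l (ginv h))) l).
  - apply gen_mul; [apply gen_inv|]; assumption.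
  - rewrite invMg, invgK, <- gmulA, gmulVg, mulg1. reflexivity.
Qed.

Definition ind (c : L) (l : L) : L :=
  if excluded_middle_informative (P l) then c else gone.

Definition wa : W L := (ind h, gone).
Definition wb : W L := (ind f, gone).
Definition wg : W L := phi' L g.
Definition wh : W L := phi' L h.

Lemma P1 : P gone. Proof. apply gen_one. Qed.

Lemma ind1 c : ind c gone = c.
Proof. unfold ind. destruct (excluded_middle_informative (P gone)); [reflexivity|]. exfalso; auto using P1. Qed.

Lemma ind_g c l : ind c (gmul l g) = ind c l.
Proof.
  unfold ind. destruct (excluded_middle_informative (P (gmul l g))) as [H|H];
  destruct (excluded_middle_informative (P l)) as [H'|H']; try reflexivity;
  exfalso; [apply H'; apply P_mulg; exact H | apply H; apply P_mulg; exact H'].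
Qed.
End Main.
Lemma comm_hf (L : group) (f h : L) : comm f h <> gone -> comm h (gmul (ginv f) gone) <> gone.
Proof.
  intros H E. apply H. rewrite mulg1 in E. apply comm1_commute, commute_inv in E.
  rewrite invgK in E. apply commute_comm1. symmetry; exact E.
Qed.

Theorem lemma3p1 (L : group) (f g h : L) :
  torsion_free L ->
  (forall x : L, gen (fun y => y = f \/ y = g \/ y = h) x) ->
  comm f h <> gone ->
  comm f g = gone ->
  (exists x : L, gen (fun y => y = g \/ y = h) x /\ x <> gone) ->
  g <> gone -> h <> gone ->
  (cyclic_subgroup (gen (fun y => y = g \/ y = h)) ->
     exists n : Z, g = gpowz h n /\ (1 < Z.abs n)%Z) ->
  exists (Gam : group) (phi : L -> Gam),
    finitely_generated Gam /\ torsion_free Gam /\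
    embeds_on (gen (fun y => y = g \/ y = h)) phi /\
    exists a b : Gam,
      a <> b /\ a <> gone /\ b <> gone /\
      commute a (phi g) /\ commute b (phi g) /\
      comm a (comm b (phi h)) <> gone /\
      commute (comm a (comm b (phi h))) (phi g).
Proof.
  intros T _ Hfh Hfg _ Hg Hh Hc.
  assert (Nh : ~ P L g h) by (apply notP_h; assumption).
  set (lst := [wg L g; wh L h; wa L g h; wb L f g]).
  set (S := fun z : W L => In z lst).
  set (Gam := Sub (W L) S).
  set (phi := fun x : L => lift (W L) S (phi' L x) : Gam).
  assert (HG : forall x, gen (fun y => y = g \/ y = h) x -> gen S (phi' L x)).
  { induction 1 as [x [->| ->]| |x _ IH|x y _ IHx _ IHy].
    - apply gen_in. unfold S, lst; simpl; tauto.
    - apply gen_in. unfold S, lst; simpl; tauto.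
    - apply gen_one.
    - replace (phi' L (ginv x)) with (@ginv (W L) (phi' L x)).
      + apply gen_inv; exact IH.
      + apply W_eq; simpl; [intro; apply inv1| reflexivity].
    - replace (phi' L (gmul x y)) with (@gmul (W L) (phi' L x) (phi' L y)).
      + apply gen_mul; assumption.
      + apply W_eq; simpl; [intro; apply gmul1g| reflexivity]. }
  assert (Sa : gen S (wa L g h)) by (apply gen_in; unfold S, lst; simpl; tauto).
  assert (Sb : gen S (wb L f g)) by (apply gen_in; unfold S, lst; simpl; tauto).
  assert (Sg : gen S (wg L g)) by (apply gen_in; unfold S, lst; simpl; tauto).
  assert (Sh : gen S (wh L h)) by (apply gen_in; unfold S, lst; simpl; tauto).
  assert (Ga : forall u v : Gam, proj1_sig u = proj1_sig v -> u = v) by apply sub_eq.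
  exists Gam, phi. split; [|split; [|split]].
  - apply (Sub_fg (W L) S lst). intro; unfold S; tauto.
  - apply Sub_tf, W_tf, T.
  - split.
    + intros x y Hx Hy. apply Ga. unfold phi. rewrite Sub_mul, !lift_val.
      * apply W_eq; simpl; [intro; symmetry; apply gmul1g| reflexivity].
      * apply HG; assumption.
      * apply HG; assumption.
      * apply HG, gen_mul; assumption.
    + intros x y Hx Hy E. apply (f_equal (@proj1_sig _ _)) in E. unfold phi in E.
      rewrite !lift_val in E by (apply HG; assumption).
      apply (f_equal snd) in E. exact E.
  - assert (Hfh' := comm_hf L f h Hfh).
    assert (hf : h <> f) by (intro E; subst; apply Hfh; apply commxx).
    assert (f1 : f <> gone) by (intro E; subst; apply Hfh; apply comm1l).
    assert (h1 : h <> gone) by (intro E; subst; apply Hfh; apply commx1).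
    assert (Eg : phi g = lift (W L) S (wg L g)) by reflexivity.
    assert (Eh : phi h = lift (W L) S (wh L h)) by reflexivity.
    assert (commw : forall u v, proj1_sig (@comm Gam u v) = comm (proj1_sig u) (proj1_sig v))
      by (intros; reflexivity).
    assert (CW : @comm (W L) (wb L f g) (wh L h) =
       (fun l => gmul (ginv (ind L g f l)) (ind L g f (gmul l (ginv h))), gone))
      by apply comm_fun_shift.
    set (chi := fun l => gmul (ginv (ind L g f l)) (ind L g f (gmul l (ginv h)))) in CW.
    assert (CY : @comm (W L) (wa L g h) (comm (wb L f g) (wh L h)) =
       (fun l => comm (ind L g h l) (chi l), gone))
      by (rewrite CW; apply comm_fun_fun).
    exists (lift (W L) S (wa L g h)), (lift (W L) S (wb L f g)).
    rewrite Eg, Eh.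
    split; [|split; [|split; [|split; [|split; [|split]]]]].
    + intro E. apply (f_equal (@proj1_sig _ _)) in E. rewrite !lift_val in E by assumption.
      apply (f_equal (fun p => fst p gone)) in E. simpl in E. rewrite !ind1 in E. auto.
    + intro E. apply (f_equal (@proj1_sig _ _)) in E. rewrite !lift_val in E by assumption.
      apply (f_equal (fun p => fst p gone)) in E. simpl in E. rewrite !ind1 in E. auto.
    + intro E. apply (f_equal (@proj1_sig _ _)) in E. rewrite !lift_val in E by assumption.
      apply (f_equal (fun p => fst p gone)) in E. simpl in E. rewrite !ind1 in E. auto.
    + apply Ga. rewrite !Sub_mul, !lift_val by assumption.
      apply commute_fun. intro; apply ind_g.
    + apply Ga. rewrite !Sub_mul, !lift_val by assumption.
      apply commute_fun. intro; apply ind_g.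
    + intro E. apply (f_equal (@proj1_sig _ _)) in E. rewrite !commw, !lift_val in E by assumption.
      rewrite CY in E. apply (f_equal (fun p => fst p gone)) in E. simpl in E.
      unfold chi in E. rewrite !ind1 in E.
      unfold ind in E. destruct (excluded_middle_informative (P L g (gmul gone (ginv h)))) as [Q|Q].
      * exfalso. exact (P_shift L g h gone Nh (P1 L g) Q).
      * exact (Hfh' E).
    + apply Ga. rewrite !Sub_mul, !commw, !lift_val by assumption. rewrite CY.
      apply commute_fun. intro l. unfold chi. rewrite !ind_g.
      unfold ind. destruct (excluded_middle_informative (P L g l)) as [Q|Q].
      * destruct (excluded_middle_informative (P L g (gmul l (ginv h)))) as [Q1|Q1];
        [exfalso; exact (P_shift L g h l Nh Q Q1)|].
        destruct (excluded_middle_informative (P L g (gmul (gmul l g) (ginv h)))) as [Q2|Q2];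
        [exfalso; exact (P_shift L g h (gmul l g) Nh (proj2 (P_mulg L g l) Q) Q2)|].
        reflexivity.
      * rewrite !comm1l. reflexivity.
Qed.
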